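(* Let $k$ be a field, $A$ a finitely generated commutative $k$-algebra, $k_n=k[t]/(t^{n+1})$, and $B$ a $k_n$-algebra with an isomorphism $gr\,B\simeq A\otimes_kk_n$ such that $B$ induces a deformation of $D(A)$. Suppose there is a $k$-algebra homomorphism $s:D(A)\to D(B)$ with $\tau\circ s=\mathrm{id}$, where $\tau:D(B)\to D(A)$ is the residue map, and regard $B$ as a left $A\otimes_kk_n$-module via $a\cdot b=s(a)(b)$. Then $D({}_BB)=D({}_{A\otimes_kk_n}B)$ as subrings of $\operatorname{End}_{k_n}(B)$.
   Context: All differential operators are $k[t]$-linear. For a $k_n$-algebra $C$ and a left $C$-module $M$, $D({}_CM)=\bigcup_mD^m({}_CM)$ where $D^m({}_CM)=\{d\in\operatorname{End}_{k_n}(M): [f_m,\dots,[f_0,d]\dots]=0\ \forall f_0,\dots,f_m\in C\}$, with $f$ acting through the module structure and $[f,d]=fd-df$. $D({}_BB)$ uses the left multiplication of $B$ on itself; $D(B)=D({}_BB)$; $D(A)$ is the ring of $k$-linear differential operators on $A$, containing $A$. $gr$ is taken for the $t$-adic filtration. The map $\gamma:gr\,D(B)\to\operatorname{End}_{k_n}(gr\,B)$ sends the class of $d\in t^iD(B)$ to the endomorphism $t^jB/t^{j+1}B\to t^{i+j}B/t^{i+j+1}B$ induced by $d$; it lands in $D(gr\,B)$. $B$ induces a deformation of $D(A)$ if $\gamma:gr\,D(B)\to D(gr\,B)$ is an isomorphism; then $D(B)/tD(B)\simeq D(A)$, and $\tau$ is the induced residue map. *)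

(* Defs.v *)
From HB Require Import structures.
From mathcomp Require Import all_boot all_order all_algebra.
Set Implicit Arguments. Unset Strict Implicit. Unset Printing Implicit Defensive.
Import GRing.Theory.
Local Open Scope ring_scope.

Definition comm_op (M : zmodType) (f d : M -> M) : M -> M :=
  fun x => f (d x) - d (f x).

Fixpoint iter_comm (M : zmodType) (fs : seq (M -> M)) (d : M -> M) : M -> M :=
  match fs with
  | [::] => d
  | f :: fs' => iter_comm fs' (comm_op f d)
  end.

Definition diff_order (C : Type) (M : zmodType) (act : C -> M -> M)
  (m : nat) (d : M -> M) : Prop :=
  forall fs : seq C, size fs = m.+1 -> forall x, iter_comm (map act fs) d x = 0.

Definition is_diff (C : Type) (M : zmodType) (act : C -> M -> M) (d : M -> M) :=
  exists m, diff_order act m d.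

Definition lin_over (R : pzRingType) (M : lmodType R) (d : M -> M) : Prop :=
  forall (r : R) (x y : M), d (r *: x + y) = r *: d x + d y.

Definition diffop_mod (R : pzRingType) (M : lmodType R) (C : Type)
  (act : C -> M -> M) (d : M -> M) : Prop :=
  lin_over d /\ is_diff act d.

Definition DA (k : fieldType) (A : comAlgType k) (P : A -> A) : Prop :=
  @diffop_mod k A A (fun a x => a * x) P.

(* D(B) = D(_B B), for a k_n-algebra B, i.e. a k[t]-algebra killed by t^(n+1) *)
Definition DB (k : fieldType) (B : algType {poly k}) (d : B -> B) : Prop :=
  @diffop_mod {poly k} B B (fun b x => b * x) d.

Inductive in_subalg (k : fieldType) (A : comAlgType k) (S : seq A) : A -> Prop :=
  | sub_gen x : x \in S -> in_subalg S x
  | sub_scal (c : k) : in_subalg S (c%:A)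
  | sub_add x y : in_subalg S x -> in_subalg S y -> in_subalg S (x + y)
  | sub_mul x y : in_subalg S x -> in_subalg S y -> in_subalg S (x * y).

Definition fingen_alg (k : fieldType) (A : comAlgType k) : Prop :=
  exists S : seq A, forall a : A, in_subalg S a.

Definition in_tpow (k : fieldType) (B : algType {poly k}) (m : nat) (x : B) : Prop :=
  exists y : B, x = 'X^m *: y.

Definition in_tD (k : fieldType) (B : algType {poly k}) (i : nat) (d : B -> B) : Prop :=
  exists d', DB d' /\ forall x, d x = 'X^i *: d' x.

(* ---------- A (x)_k k_n, modelled by coefficient vectors sum_i a_i t^i ---------- *)
Definition ATn (k : fieldType) (A : comAlgType k) (n : nat) := {ffun 'I_n.+1 -> A}.

Definition mul_tr (k : fieldType) (A : comAlgType k) (n : nat) (f g : ATn A n) : ATn A n :=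
  [ffun m : 'I_n.+1 => \sum_(i < n.+1 | (i <= m)%N) f i * g (inord (m - i))].

(* multiplication by t *)
Definition tsh (k : fieldType) (A : comAlgType k) (n : nat) (g : ATn A n) : ATn A n :=
  [ffun m : 'I_n.+1 => if (m == 0 :> nat) then 0 else g (inord m.-1)].

Definition pact (k : fieldType) (A : comAlgType k) (n : nat) (p : {poly k}) (g : ATn A n)
  : ATn A n :=
  [ffun m : 'I_n.+1 => \sum_(i < n.+1) p`_i *: (iter i (@tsh k A n) g) m].

Definition DATn (k : fieldType) (A : comAlgType k) (n : nat) (E : ATn A n -> ATn A n) : Prop :=
  (forall (p : {poly k}) (g h : ATn A n),
      E [ffun m => pact p g m + h m] = [ffun m => pact p (E g) m + E h m])
  /\ is_diff (@mul_tr k A n) E.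

(* psi m : t^m B -> A induces t^m B / t^(m+1) B ~ A = degree-m part of A (x) k_n *)
Record graded_iso (k : fieldType) (A : comAlgType k) (n : nat) (B : algType {poly k})
  (psi : nat -> B -> A) : Prop := {
  gi_lin : forall m (c : k) (x y : B), (m <= n)%N -> in_tpow m x -> in_tpow m y ->
             psi m (c%:P *: x + y) = c *: psi m x + psi m y;
  gi_ker : forall m (x : B), (m <= n)%N -> in_tpow m x ->
             (psi m x = 0 <-> in_tpow m.+1 x);
  gi_surj : forall m (a : A), (m <= n)%N -> exists x : B, in_tpow m x /\ psi m x = a;
  gi_mul : forall i j (x y : B), (i + j <= n)%N -> in_tpow i x -> in_tpow j y ->
             psi (i + j)%N (x * y) = psi i x * psi j y;
  gi_t : forall m (x : B), (m < n)%N -> in_tpow m x -> psi m.+1 ('X *: x) = psi m x;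
  gi_1 : psi 0%N 1 = 1 }.

(* E is (the transport to A (x) k_n of) gamma([d]) for d in t^i D(B) *)
Definition gamma_rep (k : fieldType) (A : comAlgType k) (n : nat) (B : algType {poly k})
  (psi : nat -> B -> A) (i : nat) (d : B -> B) (E : ATn A n -> ATn A n) : Prop :=
  forall (g : ATn A n) (x : 'I_n.+1 -> B),
    (forall j : 'I_n.+1, in_tpow j (x j) /\ psi j (x j) = g j) ->
    forall m : 'I_n.+1,
      E g m = if (i <= m)%N then psi m (d (x (inord (m - i)))) else 0.

(* B induces a deformation of D(A): gamma : gr D(B) = (+)_(i<=n) t^iD(B)/t^(i+1)D(B)
   -> D(gr B) is bijective *)
Definition deformation (k : fieldType) (A : comAlgType k) (n : nat) (B : algType {poly k})
  (psi : nat -> B -> A) : Prop :=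
  (forall (ds : 'I_n.+1 -> B -> B) (Es : 'I_n.+1 -> ATn A n -> ATn A n),
     (forall i : 'I_n.+1, in_tD i (ds i) /\ gamma_rep psi i (ds i) (Es i)) ->
     (forall g, \sum_(i < n.+1) Es i g = 0) ->
     forall i : 'I_n.+1, in_tD i.+1 (ds i))
  /\
  (forall E : ATn A n -> ATn A n, DATn E ->
     exists (ds : 'I_n.+1 -> B -> B) (Es : 'I_n.+1 -> ATn A n -> ATn A n),
       (forall i : 'I_n.+1, in_tD i (ds i) /\ gamma_rep psi i (ds i) (Es i)) /\
       (forall g, E g = \sum_(i < n.+1) Es i g)).

(* residue map: tau(d) = P, i.e. d induces P on B/tB ~ A *)
Definition residue_is (k : fieldType) (A : comAlgType k) (B : algType {poly k})
  (psi : nat -> B -> A) (d : B -> B) (P : A -> A) : Prop :=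
  forall x : B, psi 0%N (d x) = P (psi 0%N x).

Definition alg_section (k : fieldType) (A : comAlgType k) (B : algType {poly k})
  (psi : nat -> B -> A) (s : (A -> A) -> (B -> B)) : Prop :=
  (forall P, DA P -> DB (s P)) /\
  (forall P Q, DA P -> DA Q -> s (fun x => P x + Q x) =1 (fun x => s P x + s Q x)) /\
  (forall (c : k) P, DA P -> s (fun x => c *: P x) =1 (fun x => c%:P *: s P x)) /\
  (forall P Q, DA P -> DA Q -> s (P \o Q) =1 (s P \o s Q)) /\
  (s (fun x => x) =1 (fun x => x)) /\
  (forall P, DA P -> residue_is psi (s P) P).

Definition act_ATn (k : fieldType) (A : comAlgType k) (n : nat) (B : algType {poly k})
  (s : (A -> A) -> (B -> B)) (f : ATn A n) (b : B) : B :=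
  \sum_(i < n.+1) 'X^i *: s (fun x => f i * x) b.

(* Main.v *)
Require Import Defs.
From HB Require Import structures.
From mathcomp Require Import all_boot all_order all_algebra.
From Stdlib Require Import FunctionalExtensionality ClassicalEpsilon.
Set Implicit Arguments. Unset Strict Implicit. Unset Printing Implicit Defensive.
Import GRing.Theory.
Local Open Scope ring_scope.

Fixpoint ordle (M : zmodType) (C : Type) (act : C -> M -> M) (q : nat) (d : M -> M) : Prop :=
  match q with
  | 0%N => forall x, d x = 0
  | q'.+1 => forall c, ordle act q' (comm_op (act c) d)
  end.

Lemma diff_order_ordle (M : zmodType) (C : Type) (act : C -> M -> M) m d :
  diff_order act m d <-> ordle act m.+1 d.
Proof.
elim: m d => [|m IH] d /=.
  split.
    by move=> H c x; apply: (H [:: c]).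
  by move=> H [|c [|? ?]] //= _ x; apply: H.
split.
  move=> H c; apply/IH => fs Hs x.
  by apply: (H (c :: fs)) => /=; rewrite Hs.
move=> H [|c fs] //= [Hs] x.
by have /IH := H c; apply.
Qed.

Definition addact (M : zmodType) (C : Type) (act : C -> M -> M) :=
  forall c x y, act c (x + y) = act c x + act c y.

Lemma addact0 (M : zmodType) (C : Type) (act : C -> M -> M) c :
  addact act -> act c 0 = 0.
Proof. by move=> h; apply: (addrI (act c 0)); rewrite -h !addr0. Qed.

Lemma addactN (M : zmodType) (C : Type) (act : C -> M -> M) c x :
  addact act -> act c (- x) = - act c x.
Proof.
move=> h; apply/eqP; rewrite -subr_eq0 opprK -h addNr.
by rewrite (addact0 _ h).
Qed.

Lemma ordle_mono (M : zmodType) (C : Type) (act : C -> M -> M) q d :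
  addact act -> ordle act q d -> ordle act q.+1 d.
Proof.
move=> h; elim: q d => [|q IH] d /=.
  by move=> H c x; rewrite /comm_op !H (addact0 _ h) subr0.
by move=> H c; apply: IH.
Qed.

Lemma ordle_add (M : zmodType) (C : Type) (act : C -> M -> M) q d1 d2 :
  addact act -> ordle act q d1 -> ordle act q d2 -> ordle act q (fun x => d1 x + d2 x).
Proof.
move=> h; elim: q d1 d2 => [|q IH] d1 d2 /=.
  by move=> H1 H2 x; rewrite H1 H2 addr0.
move=> H1 H2 c.
have -> : comm_op (act c) (fun x => d1 x + d2 x) =
   (fun x => comm_op (act c) d1 x + comm_op (act c) d2 x).
  by apply: functional_extensionality => x; rewrite /comm_op h opprD addrACA.
by apply: IH.
Qed.

Lemma ordle_opp (M : zmodType) (C : Type) (act : C -> M -> M) q d :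
  addact act -> ordle act q d -> ordle act q (fun x => - d x).
Proof.
move=> h; elim: q d => [|q IH] d /=.
  by move=> H x; rewrite H oppr0.
move=> H c.
have -> : comm_op (act c) (fun x => - d x) = (fun x => - comm_op (act c) d x).
  by apply: functional_extensionality => x; rewrite /comm_op (addactN _ _ h) opprB opprK addrC.
by apply: IH.
Qed.

Lemma ordle0 (M : zmodType) (C : Type) (act : C -> M -> M) q :
  addact act -> ordle act q (fun _ => 0).
Proof.
move=> h; elim: q => [|q IH] //= c.
have -> : comm_op (act c) (fun _ => 0) = (fun _ => 0) :> (M -> M).
  by apply: functional_extensionality => x; rewrite /comm_op (addact0 _ h) subr0.
exact: IH.
Qed.

Lemma ordle_sum (M : zmodType) (C : Type) (act : C -> M -> M) q (I : Type) (r : seq I)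
   (F : I -> M -> M) :
  addact act -> (forall i, ordle act q (F i)) -> ordle act q (fun x => \sum_(i <- r) F i x).
Proof.
move=> h H; elim: r => [|i r IH].
  have -> : (fun x => \sum_(i <- [::]) F i x) = (fun _ => 0) :> (M -> M).
    by apply: functional_extensionality => x; rewrite big_nil.
  exact: ordle0.
have -> : (fun x => \sum_(j <- i :: r) F j x) = (fun x => F i x + \sum_(j <- r) F j x).
  by apply: functional_extensionality => x; rewrite big_cons.
exact: ordle_add.
Qed.

Lemma ordle_scale (R : pzRingType) (M : lmodType R) (C : Type) (act : C -> M -> M) q d (r : R) :
  (forall c y, act c (r *: y) = r *: act c y) ->
  ordle act q d -> ordle act q (fun x => r *: d x).
Proof.
move=> h; elim: q d => [|q IH] d /=.
  by move=> H x; rewrite H scaler0.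
move=> H c.
have -> : comm_op (act c) (fun x => r *: d x) = (fun x => r *: comm_op (act c) d x).
  by apply: functional_extensionality => x; rewrite /comm_op h scalerBr.
by apply: IH.
Qed.

Lemma is_diff_ordle (M : zmodType) (C : Type) (act : C -> M -> M) d :
  addact act -> is_diff act d <-> exists q, ordle act q d.
Proof.
move=> h; split.
  by case=> m /diff_order_ordle H; exists m.+1.
case=> q H; exists q; apply/diff_order_ordle; exact: ordle_mono.
Qed.

Lemma lin0 (R : pzRingType) (M : lmodType R) (d : M -> M) : lin_over d -> d 0 = 0.
Proof.
move=> h; have := h 1 0 0; rewrite scale1r addr0 scale1r => H.
by move/(congr1 (fun z => z - d 0)): H; rewrite subrr addrK => <-.
Qed.

Lemma linD (R : pzRingType) (M : lmodType R) (d : M -> M) x y : lin_over d -> d (x + y) = d x + d y.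
Proof. by move=> h; have := h 1 x y; rewrite !scale1r. Qed.

Lemma linZ (R : pzRingType) (M : lmodType R) (d : M -> M) r x : lin_over d -> d (r *: x) = r *: d x.
Proof. by move=> h; have := h r x 0; rewrite !addr0 (lin0 h) addr0. Qed.

Lemma linN (R : pzRingType) (M : lmodType R) (d : M -> M) x : lin_over d -> d (- x) = - d x.
Proof. by move=> h; rewrite -scaleN1r linZ // scaleN1r. Qed.

Lemma linB (R : pzRingType) (M : lmodType R) (d : M -> M) x y : lin_over d -> d (x - y) = d x - d y.
Proof. by move=> h; rewrite linD // linN. Qed.

Lemma lin_add (R : pzRingType) (M : lmodType R) (d1 d2 : M -> M) :
  lin_over d1 -> lin_over d2 -> lin_over (fun x => d1 x + d2 x).
Proof.
move=> h1 h2 r x y; rewrite h1 h2 scalerDr.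
by rewrite -!addrA; congr (_ + _); rewrite addrCA.
Qed.

Lemma lin_opp (R : pzRingType) (M : lmodType R) (d : M -> M) :
  lin_over d -> lin_over (fun x => - d x).
Proof. by move=> h r x y; rewrite h opprD scalerN. Qed.

Lemma lin_comp (R : pzRingType) (M : lmodType R) (d1 d2 : M -> M) :
  lin_over d1 -> lin_over d2 -> lin_over (fun x => d1 (d2 x)).
Proof. by move=> h1 h2 r x y; rewrite h2 h1. Qed.

Lemma lin_comm (R : pzRingType) (M : lmodType R) (f d : M -> M) :
  lin_over f -> lin_over d -> lin_over (comm_op f d).
Proof.
move=> hf hd; rewrite /comm_op.
apply: lin_add; first exact: lin_comp.
by apply: lin_opp; apply: lin_comp.
Qed.

Lemma lin_zero (R : pzRingType) (M : lmodType R) : lin_over (fun _ : M => 0).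
Proof. by move=> r x y; rewrite scaler0 addr0. Qed.

Lemma lin_scale (R : comPzRingType) (M : lmodType R) (d : M -> M) (p : R) :
  lin_over d -> lin_over (fun x => p *: d x).
Proof. by move=> h r x y; rewrite h scalerDr !scalerA mulrC. Qed.

Lemma addact_lin (R : pzRingType) (M : lmodType R) (C : Type) (act : C -> M -> M) :
  (forall c, lin_over (act c)) -> addact act.
Proof. by move=> h c x y; apply: linD. Qed.

Lemma diffop_add (R : pzRingType) (M : lmodType R) (C : Type) (act : C -> M -> M) d1 d2 :
  (forall c, lin_over (act c)) -> diffop_mod act d1 -> diffop_mod act d2 ->
  diffop_mod act (fun x => d1 x + d2 x).
Proof.
move=> h [l1 o1] [l2 o2]; split; first exact: lin_add.
have ha := addact_lin h.
move: o1 o2 => /(is_diff_ordle _ ha) [q1 o1] /(is_diff_ordle _ ha) [q2 o2].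
apply/(is_diff_ordle _ ha); exists (q1 + q2)%N.
have mono : forall q q' d, (q <= q')%N -> ordle act q d -> ordle act q' d.
  move=> q q' d /subnKC <-; elim: (q' - q)%N => [|m IH] H; first by rewrite addn0.
  by rewrite addnS; apply: ordle_mono => //; apply: IH.
by apply: ordle_add => //; apply: mono; [exact: leq_addr | | exact: leq_addl |].
Qed.

Lemma diffop_opp (R : pzRingType) (M : lmodType R) (C : Type) (act : C -> M -> M) d :
  (forall c, lin_over (act c)) -> diffop_mod act d -> diffop_mod act (fun x => - d x).
Proof.
move=> h [l o]; split; first exact: lin_opp.
have ha := addact_lin h.
move: o => /(is_diff_ordle _ ha) [q o].
by apply/(is_diff_ordle _ ha); exists q; apply: ordle_opp.
Qed.

Lemma diffop_zero (R : pzRingType) (M : lmodType R) (C : Type) (act : C -> M -> M) :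
  (forall c, lin_over (act c)) -> diffop_mod act (fun _ => 0).
Proof.
move=> h; split; first exact: lin_zero.
by apply/(is_diff_ordle _ (addact_lin h)); exists 0%N.
Qed.

Lemma diffop_scale (R : comPzRingType) (M : lmodType R) (C : Type) (act : C -> M -> M) d p :
  (forall c, lin_over (act c)) -> diffop_mod act d -> diffop_mod act (fun x => p *: d x).
Proof.
move=> h [l o]; split; first exact: lin_scale.
have ha := addact_lin h.
move: o => /(is_diff_ordle _ ha) [q o].
apply/(is_diff_ordle _ ha); exists q; apply: ordle_scale => // c y.
exact: linZ.
Qed.

Lemma ordleA_mull (k : fieldType) (A : comAlgType k) q (P : A -> A) a :
  ordle (fun a x => a * x) q P -> ordle (fun a x => a * x) q (fun x => a * P x).
Proof.
elim: q P => [|q IH] P /=.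
  by move=> H x; rewrite H mulr0.
move=> H c.
have -> : comm_op (fun x => c * x) (fun x => a * P x) = (fun x => a * comm_op (fun x => c * x) P x).
  by apply: functional_extensionality => x; rewrite /comm_op mulrBr mulrCA.
exact: IH.
Qed.

Lemma ordleA_mulr (k : fieldType) (A : comAlgType k) q (P : A -> A) a :
  ordle (fun a x => a * x) q P -> ordle (fun a x => a * x) q (fun x => P (a * x)).
Proof.
elim: q P => [|q IH] P /=.
  by move=> H x; rewrite H.
move=> H c.
have -> : comm_op (fun x => c * x) (fun x => P (a * x)) =
     (fun x => comm_op (fun x => c * x) P (a * x)).
  by apply: functional_extensionality => x; rewrite /comm_op mulrCA.
exact: IH.
Qed.

Lemma DA_mul (k : fieldType) (A : comAlgType k) (a : A) : DA (fun x => a * x).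
Proof.
split; first by move=> r x y; rewrite mulrDr scalerAr.
exists 0%N => [[|c [|? ?]]] //= _ x.
by rewrite /comm_op mulrCA subrr.
Qed.

Lemma addactA (k : fieldType) (A : comAlgType k) : addact (fun (a : A) x => a * x).
Proof. by move=> c x y; rewrite mulrDr. Qed.

Lemma DA_mull (k : fieldType) (A : comAlgType k) (P : A -> A) a : DA P -> DA (fun x => a * P x).
Proof.
case=> l /(is_diff_ordle _ (@addactA _ _)) [q o]; split.
  by move=> r x y; rewrite l mulrDr scalerAr.
by apply/(is_diff_ordle _ (@addactA _ _)); exists q; apply: ordleA_mull.
Qed.

Lemma DA_mulr (k : fieldType) (A : comAlgType k) (P : A -> A) a : DA P -> DA (fun x => P (a * x)).
Proof.
case=> l /(is_diff_ordle _ (@addactA _ _)) [q o]; split.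
  by move=> r x y; rewrite mulrDr -scalerAr l.
by apply/(is_diff_ordle _ (@addactA _ _)); exists q; apply: ordleA_mulr.
Qed.

Lemma DA_scale (k : fieldType) (A : comAlgType k) (P : A -> A) (c : k) : DA P -> DA (fun x => c *: P x).
Proof.
case=> l /(is_diff_ordle _ (@addactA _ _)) [q o]; split; first exact: lin_scale.
apply/(is_diff_ordle _ (@addactA _ _)); exists q; apply: ordle_scale => //.
by move=> a y; rewrite scalerAr.
Qed.

Lemma DA_add (k : fieldType) (A : comAlgType k) (P Q : A -> A) : DA P -> DA Q -> DA (fun x => P x + Q x).
Proof. by move=> hP hQ; apply: diffop_add => // c; case: (DA_mul c). Qed.

Lemma tp0 (k : fieldType) (B : algType {poly k}) (x : B) : in_tpow 0 x.
Proof. by exists x; rewrite expr0 scale1r. Qed.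

Lemma tp_zero (k : fieldType) (B : algType {poly k}) m : in_tpow m (0 : B).
Proof. by exists 0; rewrite scaler0. Qed.

Lemma tp_add (k : fieldType) (B : algType {poly k}) m (x y : B) :
  in_tpow m x -> in_tpow m y -> in_tpow m (x + y).
Proof. by move=> [x' ->] [y' ->]; exists (x' + y'); rewrite scalerDr. Qed.

Lemma tp_opp (k : fieldType) (B : algType {poly k}) m (x : B) :
  in_tpow m x -> in_tpow m (- x).
Proof. by move=> [x' ->]; exists (- x'); rewrite scalerN. Qed.

Lemma tp_sub (k : fieldType) (B : algType {poly k}) m (x y : B) :
  in_tpow m x -> in_tpow m y -> in_tpow m (x - y).
Proof. by move=> hx hy; apply: tp_add => //; apply: tp_opp. Qed.

Lemma tp_lin (k : fieldType) (B : algType {poly k}) m (d : B -> B) x :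
  lin_over d -> in_tpow m x -> in_tpow m (d x).
Proof. by move=> h [x' ->]; exists (d x'); rewrite linZ. Qed.

Lemma tp_S (k : fieldType) (B : algType {poly k}) m (x : B) :
  in_tpow m.+1 x -> in_tpow m x.
Proof. by move=> [x' ->]; exists ('X *: x'); rewrite scalerA -exprSr. Qed.

Lemma tp_X (k : fieldType) (B : algType {poly k}) m (x : B) :
  in_tpow m x -> in_tpow m.+1 ('X *: x).
Proof. by move=> [x' ->]; exists x'; rewrite scalerA -exprS. Qed.

Lemma tp_Xj (k : fieldType) (B : algType {poly k}) m (x : B) : in_tpow m ('X^m *: x).
Proof. by exists x. Qed.

Lemma tp_top (k : fieldType) (B : algType {poly k}) n (x : B) :
  'X^(n.+1) *: (1 : B) = 0 -> in_tpow n.+1 x -> x = 0.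
Proof. by move=> hB [x' ->]; rewrite -(mul1r x') scalerAl hB mul0r. Qed.

Lemma tp_sum (k : fieldType) (B : algType {poly k}) m (I : Type) (r : seq I) (F : I -> B) :
  (forall i, in_tpow m (F i)) -> in_tpow m (\sum_(i <- r) F i).
Proof.
move=> H; elim: r => [|i r IH]; first by rewrite big_nil; apply: tp_zero.
by rewrite big_cons; apply: tp_add.
Qed.

Lemma psi0z (k : fieldType) (A : comAlgType k) (n : nat) (B : algType {poly k})
  (psi : nat -> B -> A) m : graded_iso n psi -> (m <= n)%N -> psi m 0 = 0.
Proof.
move=> h hm; have := gi_lin h 1 hm (tp_zero _ m) (tp_zero _ m).
rewrite scaler0 addr0 scale1r => H.
by move/(congr1 (fun z => z - psi m 0)): H; rewrite subrr addrK => <-.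
Qed.

Lemma psiD (k : fieldType) (A : comAlgType k) (n : nat) (B : algType {poly k})
  (psi : nat -> B -> A) m x y : graded_iso n psi -> (m <= n)%N ->
  in_tpow m x -> in_tpow m y -> psi m (x + y) = psi m x + psi m y.
Proof. by move=> h hm hx hy; have := gi_lin h 1 hm hx hy; rewrite scale1r scale1r. Qed.

Lemma psiN (k : fieldType) (A : comAlgType k) (n : nat) (B : algType {poly k})
  (psi : nat -> B -> A) m x : graded_iso n psi -> (m <= n)%N ->
  in_tpow m x -> psi m (- x) = - psi m x.
Proof.
move=> h hm hx; have := gi_lin h (-1) hm hx (tp_zero _ m).
by rewrite addr0 polyCN scaleN1r (psi0z h hm) addr0 scaleN1r.
Qed.

Lemma psiB (k : fieldType) (A : comAlgType k) (n : nat) (B : algType {poly k})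
  (psi : nat -> B -> A) m x y : graded_iso n psi -> (m <= n)%N ->
  in_tpow m x -> in_tpow m y -> psi m (x - y) = psi m x - psi m y.
Proof.
by move=> h hm hx hy; rewrite (psiD h hm hx (tp_opp hy)) (psiN h hm hy).
Qed.

Lemma psiX (k : fieldType) (A : comAlgType k) (n : nat) (B : algType {poly k})
  (psi : nat -> B -> A) j y : graded_iso n psi -> (j <= n)%N ->
  psi j ('X^j *: y) = psi 0%N y.
Proof.
move=> h; elim: j => [|j IH] hj; first by rewrite expr0 scale1r.
rewrite exprS -scalerA (gi_t h) ?IH //; [exact: ltnW | exact: tp_Xj].
Qed.

Lemma psi_kill (k : fieldType) (A : comAlgType k) (n : nat) (B : algType {poly k})
  (psi : nat -> B -> A) j x : graded_iso n psi -> (j <= n)%N ->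
  in_tpow j.+1 x -> psi j x = 0.
Proof. by move=> h hj hx; apply/(gi_ker h hj (tp_S hx)). Qed.

Definition liftB (k : fieldType) (A : comAlgType k) (n : nat) (B : algType {poly k})
  (psi : nat -> B -> A) (h : graded_iso n psi) (a : A) : B :=
  proj1_sig (constructive_indefinite_description _ (gi_surj h a (leq0n n))).

Lemma liftP (k : fieldType) (A : comAlgType k) (n : nat) (B : algType {poly k})
  (psi : nat -> B -> A) (h : graded_iso n psi) (a : A) : psi 0%N (liftB h a) = a.
Proof.
rewrite /liftB; case: (constructive_indefinite_description _ _) => x [_ ->] //.
Qed.

Definition tau (k : fieldType) (A : comAlgType k) (n : nat) (B : algType {poly k})
  (psi : nat -> B -> A) (h : graded_iso n psi) (j : nat) (e : B -> B) : A -> A :=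
  fun a => psi j (e (liftB h a)).

Lemma WD (k : fieldType) (A : comAlgType k) (n : nat) (B : algType {poly k})
  (psi : nat -> B -> A) (h : graded_iso n psi) j (e : B -> B) x x' :
  (j <= n)%N -> lin_over e -> (forall x, in_tpow j (e x)) ->
  psi 0%N x = psi 0%N x' -> psi j (e x) = psi j (e x').
Proof.
move=> hj hl he hx.
have h0 : psi 0%N (x - x') = 0 by rewrite (psiB h (leq0n n) (tp0 _) (tp0 _)) hx subrr.
have := (gi_ker h (leq0n n) (tp0 (x - x'))).1 h0 => -[y Hy].
have : psi j (e (x - x')) = 0.
  apply: (psi_kill h hj); rewrite Hy expr1 linZ //; apply: tp_X; exact: he.
rewrite linB // (psiB h hj (he _) (he _)) => /eqP; rewrite subr_eq0 => /eqP //.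
Qed.

Lemma tau_lin (k : fieldType) (A : comAlgType k) (n : nat) (B : algType {poly k})
  (psi : nat -> B -> A) (h : graded_iso n psi) j (e : B -> B) :
  (j <= n)%N -> lin_over e -> (forall x, in_tpow j (e x)) -> lin_over (tau h j e).
Proof.
move=> hj hl he r a a'; rewrite /tau.
rewrite (@WD _ _ _ _ _ h j e _ (r%:P *: liftB h a + liftB h a')) //; last first.
  by rewrite (gi_lin h r (leq0n n) (tp0 _) (tp0 _)) !liftP.
by rewrite hl (gi_lin h r hj (he _) (he _)).
Qed.

Lemma tau_comm (k : fieldType) (A : comAlgType k) (n : nat) (B : algType {poly k})
  (psi : nat -> B -> A) (h : graded_iso n psi) j (e : B -> B)
  (C : Type) (act : C -> B -> B) (phi : C -> A) c :
  (forall c, lin_over (act c)) ->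
  (forall c x, psi 0%N (act c x) = phi c * psi 0%N x) ->
  (forall c z, in_tpow j z -> psi j (act c z) = phi c * psi j z) ->
  (j <= n)%N -> lin_over e -> (forall x, in_tpow j (e x)) ->
  tau h j (comm_op (act c) e) = comm_op (fun x => phi c * x) (tau h j e).
Proof.
move=> hl h0 hj' hj hle he; apply: functional_extensionality => a.
rewrite /tau /comm_op.
rewrite (psiB h hj (tp_lin (hl c) (he _)) (he _)) hj' //.
congr (_ - _).
apply: (WD h) => //.
by rewrite h0 !liftP.
Qed.

Lemma tau_ord (k : fieldType) (A : comAlgType k) (n : nat) (B : algType {poly k})
  (psi : nat -> B -> A) (h : graded_iso n psi) j
  (C : Type) (act : C -> B -> B) (phi : C -> A) :
  (forall c, lin_over (act c)) ->
  (forall c x, psi 0%N (act c x) = phi c * psi 0%N x) ->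
  (forall c z, in_tpow j z -> psi j (act c z) = phi c * psi j z) ->
  (forall a, exists c, phi c = a) ->
  (j <= n)%N -> forall q (e : B -> B), lin_over e -> (forall x, in_tpow j (e x)) ->
  ordle act q e -> ordle (fun (a : A) x => a * x) q (tau h j e).
Proof.
move=> hl h0 hj' hs hj; elim=> [|q IH] e hle he /=.
  by move=> H a; rewrite /tau H (psi0z h hj).
move=> H a; have [c <-] := hs a.
rewrite -(tau_comm h c hl h0 hj') //.
apply: IH; first exact: lin_comm.
  by move=> x; rewrite /comm_op; apply: tp_sub; [exact: tp_lin (hl c) (he _) | apply: he].
exact: H.
Qed.

Lemma tau_DA (k : fieldType) (A : comAlgType k) (n : nat) (B : algType {poly k})
  (psi : nat -> B -> A) (h : graded_iso n psi) j
  (C : Type) (act : C -> B -> B) (phi : C -> A) (e : B -> B) :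
  (forall c, lin_over (act c)) ->
  (forall c x, psi 0%N (act c x) = phi c * psi 0%N x) ->
  (forall c z, in_tpow j z -> psi j (act c z) = phi c * psi j z) ->
  (forall a, exists c, phi c = a) ->
  (j <= n)%N -> diffop_mod act e -> (forall x, in_tpow j (e x)) -> DA (tau h j e).
Proof.
move=> hl h0 hj' hs hj [hle o] he; split; first exact: tau_lin.
move: o => /(is_diff_ordle _ (addact_lin hl)) [q o].
apply/(is_diff_ordle _ (@addactA _ _)); exists q.
exact: (tau_ord h hl h0 hj' hs hj).
Qed.

Lemma transfer (k : fieldType) (A : comAlgType k) (n : nat) (B : algType {poly k})
  (hB : 'X^(n.+1) *: (1 : B) = 0)
  (psi : nat -> B -> A) (h : graded_iso n psi) (s : (A -> A) -> (B -> B))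
  (hres : forall P, DA P -> residue_is psi (s P) P)
  (CS : Type) (actS : CS -> B -> B) (phiS : CS -> A)
  (CT : Type) (actT : CT -> B -> B) :
  (forall c, lin_over (actS c)) ->
  (forall c, lin_over (actT c)) ->
  (forall c x, psi 0%N (actS c x) = phiS c * psi 0%N x) ->
  (forall j c z, (j <= n)%N -> in_tpow j z -> psi j (actS c z) = phiS c * psi j z) ->
  (forall a, exists c, phiS c = a) ->
  (forall P j, DA P -> diffop_mod actS (fun x => 'X^j *: s P x)) ->
  (forall P j, DA P -> diffop_mod actT (fun x => 'X^j *: s P x)) ->
  forall e, diffop_mod actS e -> diffop_mod actT e.
Proof.
move=> hlS hlT h0 hj' hsu HS HT.
suff H : forall i j, (i + j = n.+1)%N -> forall e, diffop_mod actS e ->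
    (forall x, in_tpow j (e x)) -> diffop_mod actT e.
  by move=> e he; apply: (H n.+1 0%N) => //; [rewrite addn0 | move=> x; exact: tp0].
elim=> [|i IH] j hij e he hte.
  rewrite add0n in hij; subst j.
  have -> : e = fun _ => 0 by apply: functional_extensionality => x; apply: (tp_top hB).
  exact: diffop_zero.
have hj : (j <= n)%N by move: hij; rewrite addSn => -[<-]; apply: leq_addl.
have hP : DA (tau h j e) by apply: (tau_DA h hlS h0 (fun c z => hj' j c z hj) hsu hj he hte).
set P := tau h j e in hP.
set e' := fun x => e x - 'X^j *: s P x.
have he' : diffop_mod actS e'.
  by apply: diffop_add => //; apply: diffop_opp => //; apply: HS.
have hte' : forall x, in_tpow j.+1 (e' x).
  move=> x; have hx : in_tpow j (e' x) by apply: tp_sub => //; apply: tp_Xj.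
  apply/(gi_ker h hj hx).
  rewrite /e' (psiB h hj (hte x) (tp_Xj _ _)) (psiX _ h hj) (hres _ hP x).
  rewrite /P /tau (WD h (x' := x) hj he.1 hte) ?subrr // liftP //.
have hT : diffop_mod actT e'.
  by apply: (IH j.+1) => //; move: hij; rewrite addSn addnS.
have -> : e = fun x => e' x + 'X^j *: s P x.
  by apply: functional_extensionality => x; rewrite /e' subrK.
by apply: diffop_add => //; apply: HT.
Qed.

Lemma lin_sum (R : pzRingType) (M : lmodType R) (I : Type) (r : seq I) (F : I -> M -> M) :
  (forall i, lin_over (F i)) -> lin_over (fun x => \sum_(i <- r) F i x).
Proof.
move=> H; elim: r => [|i r IH].
  have -> : (fun x => \sum_(i <- [::]) F i x) = (fun _ => 0) :> (M -> M).
    by apply: functional_extensionality => x; rewrite big_nil.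
  exact: lin_zero.
have -> : (fun x => \sum_(j <- i :: r) F j x) = (fun x => F i x + \sum_(j <- r) F j x).
  by apply: functional_extensionality => x; rewrite big_cons.
exact: lin_add.
Qed.

Lemma lin_sum_apply (R : pzRingType) (M : lmodType R) (I : Type) (r : seq I) (F : I -> M) d :
  lin_over d -> d (\sum_(i <- r) F i) = \sum_(i <- r) d (F i).
Proof.
move=> h; elim: r => [|i r IH]; first by rewrite !big_nil lin0.
by rewrite !big_cons linD // IH.
Qed.

Lemma tp_scale (k : fieldType) (B : algType {poly k}) m (p : {poly k}) (x : B) :
  in_tpow m x -> in_tpow m (p *: x).
Proof. by move=> [x' ->]; exists (p *: x'); rewrite !scalerA mulrC. Qed.

Lemma DA0 (k : fieldType) (A : comAlgType k) : DA (fun _ : A => 0).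
Proof. by apply: diffop_zero => c; case: (DA_mul c). Qed.

Lemma szero (k : fieldType) (A : comAlgType k) (B : algType {poly k})
  (psi : nat -> B -> A) (s : (A -> A) -> (B -> B)) (hs : alg_section psi s) x :
  s (fun _ => 0) x = 0.
Proof.
case: hs => _ [_ [hsc _]].
have := hsc 0 (fun _ => 0) (DA0 A) x.
have -> : (fun x : A => 0 *: (fun _ : A => 0 : A) x) = (fun _ => 0).
  by apply: functional_extensionality => y; rewrite scale0r.
by rewrite polyC0 scale0r.
Qed.

Lemma skey (k : fieldType) (A : comAlgType k) (B : algType {poly k})
  (psi : nat -> B -> A) (s : (A -> A) -> (B -> B)) (hs : alg_section psi s) P a x :
  DA P ->
  s (fun y => a * y) (s P x) - s P (s (fun y => a * y) x) =
  s (comm_op (fun y => a * y) P) x.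
Proof.
move=> hP; case: hs => _ [hadd [hsc [hcomp _]]].
have e1 : s (fun y => a * P y) x = s (fun y => a * y) (s P x) := hcomp _ _ (DA_mul a) hP x.
have e2 : s (fun y => P (a * y)) x = s P (s (fun y => a * y) x) := hcomp _ _ hP (DA_mul a) x.
have -> : comm_op (fun y => a * y) P =
   (fun y => (fun z => a * P z) y + (fun z => (-1) *: (fun w => P (a * w)) z) y).
  by apply: functional_extensionality => y; rewrite /comm_op scaleN1r.
rewrite hadd; last first.
- by apply: DA_scale; apply: DA_mulr.
- exact: DA_mull.
rewrite hsc; last exact: DA_mulr.
by rewrite e1 e2 polyCN scaleN1r.
Qed.

Lemma actC_lin (k : fieldType) (A : comAlgType k) (n : nat) (B : algType {poly k})
  (psi : nat -> B -> A) (s : (A -> A) -> (B -> B)) (hs : alg_section psi s) f :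
  lin_over (act_ATn (n := n) s f).
Proof.
rewrite /act_ATn; apply: lin_sum => i; apply: lin_scale.
by case: hs => hD _; case: (hD _ (DA_mul (f i))).
Qed.

Lemma s_ordC (k : fieldType) (A : comAlgType k) (n : nat) (B : algType {poly k})
  (psi : nat -> B -> A) (s : (A -> A) -> (B -> B)) (hs : alg_section psi s) q :
  forall P, lin_over P -> ordle (fun (a : A) x => a * x) q P ->
  ordle (act_ATn (n := n) s) q (s P).
Proof.
have hl := actC_lin (n := n) hs.
have ha := addact_lin hl.
elim: q => [|q IH] P hlP /=.
  move=> H x.
  have -> : P = fun _ => 0 by apply: functional_extensionality.
  exact: szero hs x.
move=> H f.
have hDP : DA P.
  split => //; apply/(is_diff_ordle _ (@addactA _ _)); exists q.+1; exact: H.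
have hsP : lin_over (s P) by case: hs => hD _; case: (hD _ hDP).
have -> : comm_op (act_ATn s f) (s P) =
   (fun x => \sum_(i < n.+1) 'X^i *: s (comm_op (fun y => f i * y) P) x).
  apply: functional_extensionality => x.
  rewrite /comm_op /act_ATn lin_sum_apply // -sumrB.
  apply: eq_bigr => i _; rewrite linZ // -scalerBr.
  by rewrite (skey hs).
apply: ordle_sum => // i; apply: ordle_scale; first by move=> c y; apply: linZ.
apply: IH; last exact: H.
by apply: lin_comm => //; case: (DA_mul (f i)).
Qed.

Lemma s_DC (k : fieldType) (A : comAlgType k) (n : nat) (B : algType {poly k})
  (psi : nat -> B -> A) (s : (A -> A) -> (B -> B)) (hs : alg_section psi s) P j :
  DA P -> diffop_mod (act_ATn (n := n) s) (fun x => 'X^j *: s P x).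
Proof.
move=> hP; have hl := actC_lin (n := n) hs.
apply: diffop_scale => //.
have hsP : lin_over (s P) by case: hs => hD _; case: (hD _ hP).
split => //.
case: hP => hlP /(is_diff_ordle _ (@addactA _ _)) [q o].
apply/(is_diff_ordle _ (addact_lin hl)); exists q.
apply: s_ordC hs q P hlP o.
Qed.

Lemma s_DB (k : fieldType) (A : comAlgType k) (B : algType {poly k})
  (psi : nat -> B -> A) (s : (A -> A) -> (B -> B)) (hs : alg_section psi s) P j :
  DA P -> DB (fun x => 'X^j *: s P x).
Proof.
move=> hP; apply: diffop_scale.
  by move=> b r x y; rewrite mulrDr -scalerAr.
by case: hs => hD _; apply: hD.
Qed.

Lemma actC_psi (k : fieldType) (A : comAlgType k) (n : nat) (B : algType {poly k})
  (psi : nat -> B -> A) (h : graded_iso n psi)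
  (s : (A -> A) -> (B -> B)) (hs : alg_section psi s) j f z :
  (j <= n)%N -> in_tpow j z -> psi j (act_ATn (n := n) s f z) = f ord0 * psi j z.
Proof.
move=> hj hz.
have hsl : forall a, lin_over (s (fun y => a * y)).
  by move=> a; case: hs => hD _; case: (hD _ (DA_mul a)).
have hres : forall a x, psi 0%N (s (fun y => a * y) x) = a * psi 0%N x.
  by move=> a x; case: hs => _ [_ [_ [_ [_ hr]]]]; apply: (hr _ (DA_mul a)).
rewrite /act_ATn big_ord_recl /= expr0 scale1r.
rewrite (psiD h hj (tp_lin (hsl _) hz)); last first.
  by apply: tp_sum => i; apply: tp_S; rewrite exprS -scalerA; apply: tp_X;
     apply: tp_scale; apply: tp_lin.
rewrite (psi_kill h hj (x := \sum_(i < n) _)) ?addr0; last first.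
  by apply: tp_sum => i; rewrite exprS -scalerA; apply: tp_X;
     apply: tp_scale; apply: tp_lin.
case: hz => w ->.
by rewrite linZ // !(psiX _ h hj) hres.
Qed.

Unset Implicit Arguments.
Theorem lemma9p7 (k : fieldType) (A : comAlgType k) (n : nat) (B : algType {poly k})
  (hA : fingen_alg A)
  (hB : 'X^(n.+1) *: (1 : B) = 0)
  (psi : nat -> B -> A) (hpsi : graded_iso n psi)
  (hdef : deformation n psi)
  (s : (A -> A) -> (B -> B)) (hs : alg_section psi s) :
  forall d : B -> B,
    DB d <-> @diffop_mod {poly k} B (ATn A n) (act_ATn s) d.
Proof.
have hres : forall P, DA P -> residue_is psi (s P) P.
  by case: hs => _ [_ [_ [_ [_ hr]]]].
have hlL : forall b : B, lin_over (fun x : B => b * x).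
  by move=> b r x y; rewrite mulrDr -scalerAr.
have hlC := actC_lin (n := n) hs.
have hL0 : forall (b : B) x, psi 0%N (b * x) = psi 0%N b * psi 0%N x.
  by move=> b x; apply: (gi_mul hpsi (i := 0) (j := 0)) => //; apply: tp0.
have hLj : forall j (b : B) z, (j <= n)%N -> in_tpow j z ->
    psi j (b * z) = psi 0%N b * psi j z.
  by move=> j b z hj hz; apply: (gi_mul hpsi (i := 0) (j := j)) => //; apply: tp0.
have hLs : forall a : A, exists b : B, psi 0%N b = a.
  by move=> a; exists (liftB hpsi a); apply: liftP.
have hCj : forall j f z, (j <= n)%N -> in_tpow j z ->
    psi j (act_ATn (n := n) s f z) = f ord0 * psi j z.
  by move=> j f z; apply: actC_psi.
have hC0 : forall f x, psi 0%N (act_ATn (n := n) s f x) = f ord0 * psi 0%N x.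
  by move=> f x; apply: hCj => //; apply: tp0.
have hCs : forall a : A, exists f : ATn A n, f ord0 = a.
  by move=> a; exists [ffun i => if i == ord0 then a else 0]; rewrite ffunE eqxx.
move=> d; split.
  apply: (transfer hB hpsi hres hlL hlC hL0 hLj hLs).
    by move=> P j hP; apply: s_DB hs _ _ hP.
  by move=> P j hP; apply: s_DC hs _ _ hP.
apply: (transfer hB hpsi hres hlC hlL hC0 hCj hCs).
  by move=> P j hP; apply: s_DC hs _ _ hP.
by move=> P j hP; apply: s_DB hs _ _ hP.
Qed.
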